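(* Let $M,n,p$ be positive integers with $n+p<M$. Let $A$ ($n\times(n+p)$), $G$ ($(M-n)\times(n+p)$), $D$ ($(M-n)\times(M-n-p)$) be real matrices with $K_0=\begin{pmatrix} A&0\\ G&D\end{pmatrix}$ invertible. For a real $n\times(M-n-p)$ matrix $B$ let $K=\begin{pmatrix} A&B\\ G&D\end{pmatrix}$ and, when $K$ is invertible, write $K^{-1}=\begin{pmatrix} E&C\\ H&F\end{pmatrix}$ with $C$ of size $(n+p)\times(M-n)$, $E$ of size $(n+p)\times n$, $H$ of size $(M-n-p)\times n$, $F$ of size $(M-n-p)\times(M-n)$. Let $L$ be a best rank-$p$ approximation of $C$ obtained by truncating a singular value decomposition of $C$ (so $\operatorname{rank}L\le p$ and $\|C-L\|=\sigma_{p+1}(C)$), and set $J=\begin{pmatrix} E&L\\ H&F\end{pmatrix}$. Then there is $\epsilon_0>0$ such that whenever $\|B\|\le\epsilon_0$: $K$ and $J$ are invertible, $J^{-1}=\begin{pmatrix} \tilde A&0\\ \tilde G&\tilde D\end{pmatrix}$ for some matrices $\tilde A$ ($n\times(n+p)$), $\tilde G$ ($(M-n)\times(n+p)$), $\tilde D$ ($(M-n)\times(M-n-p)$) (i.e. the upper-right $n\times(M-n-p)$ block of $J^{-1}$ vanishes), and $$B=A(L-C)\tilde D,\qquad A-\tilde A=A(L-C)\tilde G.$$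
   Context: $\|\cdot\|$ is the spectral norm; $\sigma_k(X)$ denotes the $k$-th largest singular value of a matrix $X$. *)

(* Defs.v *)
(* Real matrices are taken over an arbitrary real closed field. *)
From HB Require Import structures.
From mathcomp Require Import all_boot all_order all_algebra.
Set Implicit Arguments. Unset Strict Implicit. Unset Printing Implicit Defensive.
Import Order.TTheory GRing.Theory Num.Theory.
Local Open Scope ring_scope.

(* Y is a two-sided inverse of X (X need not have a syntactically square type). *)
Definition is_inverse (R : comRingType) (a c : nat)
  (X : 'M[R]_(a, c)) (Y : 'M[R]_(c, a)) : Prop :=
  X *m Y = 1%:M /\ Y *m X = 1%:M.

Definition invertible (R : comRingType) (a c : nat) (X : 'M[R]_(a, c)) : Prop :=
  exists Y : 'M[R]_(c, a), is_inverse X Y.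

Definition sqnorm (R : comRingType) (c : nat) (x : 'cV[R]_c) : R :=
  \sum_(i < c) x i 0 ^+ 2.

Definition spec_norm_le (R : realFieldType) (a c : nat) (X : 'M[R]_(a, c)) (e : R) : Prop :=
  0 <= e /\ forall x : 'cV[R]_c, sqnorm (X *m x) <= e ^+ 2 * sqnorm x.

Definition orthogonal_mx (R : comRingType) (k : nat) (U : 'M[R]_k) : Prop :=
  U *m U^T = 1%:M /\ U^T *m U = 1%:M.

Definition sv_diag (R : realFieldType) (r s : nat) (S : 'M[R]_(r, s)) : Prop :=
  (forall (i : 'I_r) (j : 'I_s), nat_of_ord i <> nat_of_ord j -> S i j = 0) /\
  (forall (i : 'I_r) (j : 'I_s), nat_of_ord i = nat_of_ord j -> 0 <= S i j) /\
  (forall (i k : 'I_r) (j l : 'I_s),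
      nat_of_ord i = nat_of_ord j -> nat_of_ord k = nat_of_ord l ->
      (nat_of_ord i <= nat_of_ord k)%N -> S k l <= S i j).

Definition trunc_sv (R : realFieldType) (r s : nat) (p : nat) (S : 'M[R]_(r, s)) : 'M[R]_(r, s) :=
  \matrix_(i < r, j < s) (if (i < p)%N then S i j else 0).

Definition trunc_svd (R : realFieldType) (r s : nat) (p : nat)
  (C L : 'M[R]_(r, s)) : Prop :=
  exists (U : 'M[R]_r) (V : 'M[R]_s) (S : 'M[R]_(r, s)),
    orthogonal_mx U /\ orthogonal_mx V /\ sv_diag S /\
    C = U *m S *m V^T /\ L = U *m trunc_sv p S *m V^T.

(* Main.v *)
Require Import Defs.
From HB Require Import structures.
From mathcomp Require Import all_boot all_order all_algebra.
Set Implicit Arguments. Unset Strict Implicit. Unset Printing Implicit Defensive.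
Import Order.TTheory GRing.Theory Num.Theory.
Local Open Scope ring_scope.


Section Toolkit.
Variable R : rcfType.

Lemma CS_sum k (a b : 'I_k -> R) :
  (\sum_i a i * b i) ^+ 2 <= (\sum_i a i ^+ 2) * (\sum_i b i ^+ 2).
Proof.
set A := \sum_i a i ^+ 2; set B := \sum_i b i ^+ 2; set C := \sum_i a i * b i.
have A0 : 0 <= A by apply: sumr_ge0 => i _; exact: sqr_ge0.
have B0 : 0 <= B by apply: sumr_ge0 => i _; exact: sqr_ge0.
case: (eqVneq A 0) => [Az | Anz].
  have ai0 : forall i, a i = 0.
    move=> i; apply/eqP; rewrite -sqrf_eq0; apply/eqP.
    by apply: (psumr_eq0P _ Az) => // j _; exact: sqr_ge0.
  rewrite /C big1 ?expr0n ?Az ?mul0r //= => i _; by rewrite ai0 mul0r.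
have Apos : 0 < A by rewrite lt_def Anz A0.
have E : \sum_i (A * b i - C * a i) ^+ 2 = A * (A * B - C ^+ 2).
  rewrite (eq_bigr (fun i => A ^+ 2 * b i ^+ 2 - (A * C) * (a i * b i) *+ 2
                              + C ^+ 2 * a i ^+ 2)); last first.
    move=> i _; rewrite sqrrB !exprMn; congr (_ - _ + _); congr (_ *+ 2).
    by rewrite mulrACA [b i * _]mulrC.
  rewrite big_split /= sumrB sumrMnl -!mulr_sumr -/A -/B -/C.
  rewrite mulrBr !expr2 mulr2n opprD addrA -!mulrA [C * (C * A)]mulrC -!mulrA.
  by rewrite [C * (A * C)]mulrCA addrNK.
have : 0 <= A * (A * B - C ^+ 2).
  by rewrite -E; apply: sumr_ge0 => i _; exact: sqr_ge0.
by rewrite pmulr_rge0 // subr_ge0.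
Qed.


Lemma sqnormE c (x : 'cV[R]_c) : sqnorm x = (x^T *m x) 0 0.
Proof. by rewrite /sqnorm !mxE; apply: eq_bigr => i _; rewrite !mxE expr2. Qed.

Lemma sqnorm_ge0 c (x : 'cV[R]_c) : 0 <= sqnorm x.
Proof. by apply: sumr_ge0 => i _; exact: sqr_ge0. Qed.

Lemma sqnorm_eq0 c (x : 'cV[R]_c) : sqnorm x = 0 -> x = 0.
Proof.
move=> h; apply/matrixP => i j; rewrite (ord1 j) mxE; apply/eqP; rewrite -sqrf_eq0.
by apply/eqP; apply: (psumr_eq0P _ h) => // k _; exact: sqr_ge0.
Qed.

Definition frob r s (X : 'M[R]_(r, s)) := \sum_i \sum_j X i j ^+ 2.

Definition bnd r s (X : 'M[R]_(r, s)) (c : R) :=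
  forall x, sqnorm (X *m x) <= c * sqnorm x.

Lemma frob_ge0 r s (X : 'M[R]_(r, s)) : 0 <= frob X.
Proof. by apply: sumr_ge0 => i _; apply: sumr_ge0 => j _; exact: sqr_ge0. Qed.

Lemma frob_bound r s (X : 'M[R]_(r, s)) : bnd X (frob X).
Proof.
move=> x; rewrite /sqnorm /frob mulr_suml; apply: ler_sum => i _.
rewrite mxE.
exact: CS_sum.
Qed.

Lemma frob_tr r s (X : 'M[R]_(r, s)) : frob X^T = frob X.
Proof. by rewrite /frob exchange_big /=; apply: eq_bigr => i _; apply: eq_bigr => j _; rewrite mxE. Qed.

Lemma frob_le r s (X : 'M[R]_(r, s)) c : bnd X c -> frob X <= s%:R * c.
Proof.
move=> h; rewrite /frob exchange_big /= mulr_natl -[s in c *+ s]card_ord -sumr_const.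
apply: ler_sum => j _.
have := h (delta_mx j 0).
have -> : sqnorm (delta_mx j 0 : 'cV[R]_s) = 1.
  rewrite /sqnorm (bigD1 j) //= big1 => [|k kj]; rewrite mxE.
    by rewrite !eqxx expr1n addr0.
  by rewrite (negbTE kj) expr0n.
rewrite mulr1 /sqnorm; apply: le_trans; apply: ler_sum => i _.
by rewrite mxE (bigD1 j) //= big1 => [|k kj]; rewrite !mxE ?eqxx ?mulr1 ?addr0 // (negbTE kj) mulr0.
Qed.

Lemma bnd_tr r s (X : 'M[R]_(r, s)) c : bnd X c -> bnd X^T (s%:R * c).
Proof.
move=> h y; apply: (le_trans (frob_bound _ _)); rewrite frob_tr.
by apply: ler_wpM2r; [exact: sqnorm_ge0 | exact: frob_le].
Qed.

Lemma bnd_mul r s t (X : 'M[R]_(r, s)) (Y : 'M[R]_(s, t)) a b :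
  0 <= a -> bnd X a -> bnd Y b -> bnd (X *m Y) (a * b).
Proof.
move=> a0 hX hY x; rewrite -mulmxA; apply: (le_trans (hX _)).
by rewrite -mulrA; apply: ler_wpM2l.
Qed.

Lemma sqdiff (u v : R) : (u ^+ 2 + v ^+ 2) *+ 2 - (u + v) ^+ 2 = (u - v) ^+ 2.
Proof.
apply/eqP; rewrite subr_eq sqrrB sqrrD.
set a := u ^+ 2; set b := v ^+ 2; set d := u * v *+ 2.
by rewrite [a - d + b]addrAC [a + d + b]addrAC addrACA addNr addr0 mulr2n.
Qed.

Lemma sqnormD c (x y : 'cV[R]_c) : sqnorm (x + y) <= (sqnorm x + sqnorm y) *+ 2.
Proof.
rewrite /sqnorm -big_split -sumrMnl /=; apply: ler_sum => i _.
by rewrite mxE -subr_ge0 sqdiff; exact: sqr_ge0.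
Qed.

Lemma sqnormN c (x : 'cV[R]_c) : sqnorm (- x) = sqnorm x.
Proof. by apply: eq_bigr => i _; rewrite mxE sqrrN. Qed.

Lemma sqnorm_col_mx c1 c2 (x : 'cV[R]_c1) (y : 'cV[R]_c2) :
  sqnorm (col_mx x y) = sqnorm x + sqnorm y.
Proof. by rewrite /sqnorm big_split_ord /=; congr (_ + _); apply: eq_bigr => i _; rewrite ?col_mxEu ?col_mxEd. Qed.

Lemma sqnorm_iso r s (U : 'M[R]_(r, s)) x : U^T *m U = 1%:M -> sqnorm (U *m x) = sqnorm x.
Proof. by move=> h; rewrite !sqnormE trmx_mul mulmxA -(mulmxA x^T) h mulmx1. Qed.

Lemma sq_sum_sparse k (f : 'I_k -> R) :
  (forall j l, j != l -> f j * f l = 0) -> (\sum_i f i) ^+ 2 = \sum_i f i ^+ 2.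
Proof.
move=> h; rewrite expr2 mulr_suml; apply: eq_bigr => j _.
rewrite mulr_sumr (bigD1 j) //= big1 ?addr0 ?expr2 // => l lj.
by apply: h; rewrite eq_sym.
Qed.

Lemma sum_sparse_le k (g : 'I_k -> R) c :
  (forall j l, j != l -> g j * g l = 0) -> (forall j, g j <= c) -> 0 <= c ->
  \sum_i g i <= c.
Proof.
move=> h hc c0; case: (pickP (fun i => g i != 0)) => [i0 Hi0 | H].
  rewrite (bigD1 i0) //= big1 ?addr0 // => i ii0.
  by have := h _ _ ii0; move/eqP; rewrite mulf_eq0 (negbTE Hi0) orbF => /eqP.
by rewrite big1 // => i _; apply/eqP; have := H i; move/negbFE.
Qed.

Lemma bnd_sparse r s (X : 'M[R]_(r, s)) c :
  (forall i j l, j != l -> X i j * X i l = 0) ->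
  (forall i i' j, i != i' -> X i j * X i' j = 0) ->
  (forall i j, X i j ^+ 2 <= c) -> 0 <= c -> bnd X c.
Proof.
move=> h1 h2 h3 c0 x; rewrite /sqnorm.
have E : forall i, (X *m x) i 0 ^+ 2 = \sum_j (X i j * x j 0) ^+ 2.
  by move=> i; rewrite mxE sq_sum_sparse // => j l jl; rewrite mulrACA h1 // mul0r.
rewrite (eq_bigr _ (fun i _ => E i)).
rewrite exchange_big /= mulr_sumr; apply: ler_sum => j _.
rewrite (eq_bigr (fun i => X i j ^+ 2 * x j 0 ^+ 2)); last by move=> i _; rewrite exprMn.
rewrite -mulr_suml; apply: ler_wpM2r; first exact: sqr_ge0.
apply: sum_sparse_le => // i i' ii'.
by rewrite -exprMn h2 // expr0n.
Qed.


Lemma inj_unit k (W : 'M[R]_k) : (forall x : 'cV_k, W *m x = 0 -> x = 0) -> W \in unitmx.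
Proof.
move=> h; rewrite -unitmx_tr -row_free_unit -kermx_eq0; apply/eqP/row_matrixP => i.
rewrite row0; set r := row i (kermx W^T).
have h0 : r *m W^T = 0 by rewrite /r -row_mul mulmx_ker row0.
have h1 : W *m r^T = 0 by rewrite -[W]trmxK -trmx_mul h0 trmx0.
by apply: trmx_inj; rewrite trmx0; exact: h.
Qed.

Lemma inv_uniq a c (X : 'M[R]_(a, c)) Y Y' : is_inverse X Y -> is_inverse X Y' -> Y = Y'.
Proof.
move=> [h1 h2] [h3 h4].
by rewrite -[Y]mulmx1 -h3 mulmxA h2 mul1mx.
Qed.

Lemma inj_invertible a c (X0 X : 'M[R]_(a, c)) Y0 :
  is_inverse X0 Y0 -> (forall x : 'cV_c, X *m x = 0 -> x = 0) -> invertible X.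
Proof.
move=> [h1 h2] hX; set W := Y0 *m X.
have Wu : W \in unitmx.
  apply: inj_unit => x; rewrite /W -mulmxA => h; apply: hX.
  by rewrite -[X *m x]mul1mx -h1 -mulmxA h mulmx0.
exists (invmx W *m Y0); split.
  have -> : X = X0 *m W by rewrite /W mulmxA h1 mul1mx.
  by rewrite mulmxA -(mulmxA X0) mulmxV // mulmx1.
by rewrite -mulmxA -/W mulVmx.
Qed.

Lemma sqnorm_dsub c1 c2 (x : 'cV[R]_(c1 + c2)) : sqnorm (dsubmx x) <= sqnorm x.
Proof. by rewrite -{2}[x]vsubmxK sqnorm_col_mx lerDr sqnorm_ge0. Qed.

Lemma sqnorm_usub c1 c2 (x : 'cV[R]_(c1 + c2)) : sqnorm (usubmx x) <= sqnorm x.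
Proof. by rewrite -{2}[x]vsubmxK sqnorm_col_mx lerDl sqnorm_ge0. Qed.

Lemma sqnorm0 c : sqnorm (0 : 'cV[R]_c) = 0.
Proof. by rewrite /sqnorm big1 // => i _; rewrite mxE expr0n. Qed.

Lemma bnd_block0 r1 r2 s1 s2 (X : 'M[R]_(r1, s2)) c : 0 <= c -> bnd X c ->
  bnd (block_mx (0 : 'M_(r1, s1)) X (0 : 'M_(r2, s1)) (0 : 'M_(r2, s2))) c.
Proof.
move=> c0 h x; rewrite -{1}[x]vsubmxK mul_block_col !mul0mx add0r addr0 sqnorm_col_mx sqnorm0 addr0.
apply: (le_trans (h _)); apply: ler_wpM2l => //; exact: sqnorm_dsub.
Qed.

Lemma bnd_drsub r1 r2 s1 s2 (X : 'M[R]_(r1 + r2, s1 + s2)) c : bnd X c -> bnd (drsubmx X) c.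
Proof.
move=> h v; have := h (col_mx 0 v).
rewrite -{1}[X]submxK mul_block_col !mulmx0 !add0r !sqnorm_col_mx sqnorm0 add0r.
move=> H; apply: le_trans H; by rewrite lerDr sqnorm_ge0.
Qed.

Lemma bnd_le r s (X : 'M[R]_(r, s)) c c' : c <= c' -> bnd X c -> bnd X c'.
Proof. move=> cc h x; apply: (le_trans (h x)); apply: ler_wpM2r => //; exact: sqnorm_ge0. Qed.

Lemma bnd_iso r s (U : 'M[R]_(r, s)) : U^T *m U = 1%:M -> bnd U 1.
Proof. by move=> h x; rewrite sqnorm_iso // mul1r. Qed.

Lemma bnd_opp r s (X : 'M[R]_(r, s)) c : bnd X c -> bnd (- X) c.
Proof. by move=> h x; rewrite mulNmx sqnormN. Qed.

Lemma bnd_add r s (X Y : 'M[R]_(r, s)) a b : bnd X a -> bnd Y b -> bnd (X + Y) ((a + b) *+ 2).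
Proof.
move=> hX hY x; rewrite mulmxDl; apply: (le_trans (sqnormD _ _)).
rewrite mulrnAl; apply: ler_wMn2r; rewrite mulrDl; exact: lerD.
Qed.

Lemma sq_small c (x : 'cV[R]_c) a : a < 1 -> sqnorm x <= a * sqnorm x -> x = 0.
Proof.
move=> a1 h; apply: sqnorm_eq0; apply/eqP; rewrite eq_le sqnorm_ge0 andbT.
have : (1 - a) * sqnorm x <= 0 by rewrite mulrBl mul1r subr_le0.
by rewrite pmulr_rle0 // subr_gt0.
Qed.

End Toolkit.


Section SVD.
Variable R : rcfType.
Variables n p m : nat.
Hypothesis hn : (0 < n)%N.
Hypothesis hpm : (p < m)%N.
Variable S : 'M[R]_(n + p, m).
Hypothesis hS : sv_diag S.

Lemma hpn : (p < n + p)%N. Proof. by rewrite -{1}[p]add0n ltn_add2r. Qed.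
Definition sp : 'I_(n + p) := Ordinal hpn.
Definition sq : 'I_m := Ordinal hpm.
Definition sgm := S sp sq.

Lemma sig_ge0 : 0 <= sgm.
Proof. by case: hS => _ [h _]; apply: h. Qed.

Lemma S_tail (i : 'I_(n + p)) (j : 'I_m) : (p <= i)%N -> S i j ^+ 2 <= sgm ^+ 2.
Proof.
move=> pi; case: hS => h0 [h1 h2].
case: (eqVneq (i : nat) j) => [ij | ij].
  rewrite ler_sqr ?nnegrE ?h1 ?sig_ge0 //; by apply: h2.
by rewrite h0 ?expr0n ?sqr_ge0 //; apply/eqP.
Qed.

Lemma bnd_diag r s (X : 'M[R]_(r, s)) (c : R) :
  (forall (i : 'I_r) (j : 'I_s), (i : nat) <> j -> X i j = 0) -> (forall i j, X i j ^+ 2 <= c) -> 0 <= c ->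
  bnd X c.
Proof.
move=> h0 h1 c0; apply: bnd_sparse => //.
  move=> i j l jl; case: (eqVneq (i : nat) j) => [ij | ij].
    by rewrite (h0 i l) ?mulr0 // ij => /val_inj /eqP; rewrite (negbTE jl).
  by rewrite h0 ?mul0r //; apply/eqP.
move=> i i' j ii'; case: (eqVneq (i : nat) j) => [ij | ij].
  by rewrite (h0 i' j) ?mulr0 // -ij => /esym /val_inj /eqP; rewrite (negbTE ii').
by rewrite h0 ?mul0r //; apply/eqP.
Qed.

Lemma bnd_tail : bnd (S - trunc_sv p S) (sgm ^+ 2).
Proof.
apply: bnd_diag; last exact: sqr_ge0.
  move=> i j ij; rewrite !mxE; case: ifP => _; first by rewrite subrr.
  by case: hS => h0 _; rewrite h0 // subr0.
move=> i j; rewrite !mxE; case: ifPn => ip; first by rewrite subrr expr0n sqr_ge0.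
by rewrite subr0; apply: S_tail; rewrite leqNgt.
Qed.


Variables (U : 'M[R]_(n + p)) (V : 'M[R]_m).
Hypothesis hU : orthogonal_mx U.
Hypothesis hV : orthogonal_mx V.

Definition Sel : 'M[R]_(n + p, n) := \matrix_(i, j) ((i : nat) == (p + j)%N)%:R.
Definition Zm := U *m Sel.

Lemma ltpj (j : 'I_n) : (p + j < n + p)%N.
Proof. by rewrite addnC ltn_add2r. Qed.

Lemma Sel_ortho : Sel^T *m Sel = 1%:M.
Proof.
apply/matrixP => j k; rewrite !mxE (bigD1 (Ordinal (ltpj j))) //= big1.
  rewrite !mxE /= eqxx mul1r addr0 eqn_add2l; by [].
move=> i ij; rewrite !mxE; case: (eqVneq (i : nat) (p + j)%N) => [e|e]; last by rewrite mul0r.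
by exfalso; move: ij; rewrite (_ : i = Ordinal (ltpj j)) ?eqxx //; apply: val_inj.
Qed.

Lemma Zm_ortho : Zm^T *m Zm = 1%:M.
Proof. by rewrite /Zm trmx_mul mulmxA -(mulmxA Sel^T) (proj2 hU) mulmx1 Sel_ortho. Qed.

Lemma Zm_trunc : Zm^T *m (U *m trunc_sv p S *m V^T) = 0.
Proof.
rewrite /Zm trmx_mul !mulmxA -(mulmxA Sel^T) (proj2 hU) mulmx1.
have -> : Sel^T *m trunc_sv p S = 0.
  apply/matrixP => j k; rewrite !mxE big1 // => i _; rewrite !mxE.
  case: (eqVneq (i : nat) (p + j)%N) => [e|e]; last by rewrite mul0r.
  by rewrite e ltnNge leq_addr mulr0.
by rewrite mul0mx.
Qed.

Lemma bnd_Zt : bnd Zm^T 1.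
Proof.
rewrite /Zm trmx_mul -[1]mulr1; apply: bnd_mul => //.
  apply: bnd_sparse => //.
  - move=> j i i' ii'; rewrite !mxE.
    case: (eqVneq (i : nat) (p + j)%N) => [e|e]; last by rewrite mul0r.
    case: (eqVneq (i' : nat) (p + j)%N) => [e'|e']; last by rewrite mulr0.
    by move: ii'; rewrite (_ : i = i') ?eqxx //; apply: val_inj; rewrite /= e e'.
  - move=> j j' i jj'; rewrite !mxE.
    case: (eqVneq (i : nat) (p + j)%N) => [e|e]; last by rewrite mul0r.
    case: (eqVneq (i : nat) (p + j')%N) => [e'|e']; last by rewrite mulr0.
    move: jj'; rewrite (_ : j = j') ?eqxx //; apply: val_inj => /=.
    by apply/eqP; rewrite -(eqn_add2l p) -e -e'.
  - by move=> j i; rewrite !mxE; case: (_ == _); rewrite ?expr1n ?expr0n.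
apply: bnd_iso; rewrite trmxK; exact: (proj1 hU).
Qed.

Lemma bnd_CL : bnd (U *m S *m V^T - U *m trunc_sv p S *m V^T) (sgm ^+ 2).
Proof.
rewrite -mulmxBl -mulmxBr -[sgm ^+ 2]mulr1 -[sgm ^+ 2]mul1r.
apply: bnd_mul; first by rewrite mul1r sqr_ge0.
  apply: bnd_mul => //; first exact: bnd_iso (proj2 hU).
  exact: bnd_tail.
apply: bnd_iso; rewrite trmxK; exact: (proj1 hV).
Qed.


Lemma ST_lower (a : 'cV[R]_(n + p)) :
  (forall i : 'I_(n + p), (p < i)%N -> a i 0 = 0) -> sgm ^+ 2 * sqnorm a <= sqnorm (S^T *m a).
Proof.
move=> ha; case: hS => h0 [h1 h2].
have E : forall k, (S^T *m a) k 0 ^+ 2 = \sum_i (S i k * a i 0) ^+ 2.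
  move=> k; rewrite mxE; under eq_bigr do rewrite mxE.
  rewrite sq_sum_sparse // => i i' ii'; rewrite mulrACA.
  case: (eqVneq (i : nat) k) => [e|e]; last by rewrite h0 ?mul0r //; apply/eqP.
  rewrite (h0 i' k) ?mulr0 ?mul0r //; rewrite -e => /val_inj ii.
  by rewrite ii eqxx in ii'.
rewrite /sqnorm (eq_bigr _ (fun k _ => E k)) exchange_big /= mulr_sumr.
apply: ler_sum => i _.
case: (ltnP p i) => pi.
  by rewrite ha // expr0n mulr0; apply: sumr_ge0 => k _; exact: sqr_ge0.
have im : (i < m)%N by apply: leq_ltn_trans hpm.
rewrite (bigD1 (Ordinal im)) //=.
apply: ler_wpDr; first by apply: sumr_ge0 => k _; exact: sqr_ge0.
rewrite exprMn; apply: ler_wpM2r; first exact: sqr_ge0.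
rewrite ler_sqr ?nnegrE ?sig_ge0 ?h1 //.
by apply: h2.
Qed.

Definition Sel' : 'M[R]_(p.+1, n + p) := \matrix_(i, j) ((i : nat) == j)%:R.

Lemma ltpS (i : 'I_p.+1) : (i < n + p)%N.
Proof. by apply: leq_trans (ltn_ord i) _; exact: hpn. Qed.

Lemma Sel'_ortho : Sel' *m Sel'^T = 1%:M.
Proof.
apply/matrixP => j k; rewrite !mxE (bigD1 (Ordinal (ltpS j))) //= big1.
  by rewrite !mxE /= eqxx mul1r addr0 eq_sym.
move=> i ij; rewrite !mxE; case: (eqVneq (j : nat) i) => [e|e]; last by rewrite mul0r.
by exfalso; move: ij; rewrite (_ : i = Ordinal (ltpS j)) ?eqxx //; apply: val_inj.
Qed.

Lemma sigma_bound (A : 'M[R]_(n, n + p)) (E0 : 'M[R]_(n + p, n)) : A *m E0 = 1%:M ->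
  exists y : 'cV[R]_n, y != 0 /\
    sgm ^+ 2 * sqnorm (A^T *m y) <= sqnorm ((U *m S *m V^T)^T *m (A^T *m y)).
Proof.
move=> AE.
set X1 := Sel' *m U^T.
have r1 : (p.+1 <= \rank X1)%N.
  have := mxrankM_maxl X1 (U *m Sel'^T).
  by rewrite /X1 mulmxA -(mulmxA Sel') (proj2 hU) mulmx1 Sel'_ortho mxrank1.
have r2 : (n <= \rank A)%N.
  by have := mxrankM_maxl A E0; rewrite AE mxrank1.
have r3 := mxrank_sum_cap X1 A.
have r4 : (\rank (X1 + A)%MS <= n + p)%N by exact: rank_leq_col.
have rc : (\rank (X1 :&: A)%MS != 0)%N.
  apply/negP => /eqP h0; move: r3; rewrite h0 addn0 => r3.
  have : (p.+1 + n <= n + p)%N.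
    by apply: leq_trans r4; rewrite r3; exact: leq_add.
  by rewrite addSn addnC ltnn.
move: rc; rewrite mxrank_eq0 => cap0.
have [i0 Hi0] : exists i0, row i0 (X1 :&: A)%MS != 0.
  case: (pickP (fun i => row i (X1 :&: A)%MS != 0)) => [i Hi | H]; first by exists i.
  by move: cap0; rewrite (_ : (X1 :&: A)%MS = 0) ?eqxx //; apply/row_matrixP => i;
    rewrite row0; apply/eqP; have := H i; move/negbFE.
set r := row i0 (X1 :&: A)%MS.
have rX1 : (r <= X1)%MS by apply: submx_trans (row_sub _ _) (capmxSl _ _).
have rA : (r <= A)%MS by apply: submx_trans (row_sub _ _) (capmxSr _ _).
case/submxP: rX1 => w hw; case/submxP: rA => y' hy.
exists y'^T; split.
  apply/negP => /eqP y0; move: Hi0; rewrite -/r hy -[y']trmxK y0 trmx0 mul0mx eqxx //.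
have -> : A^T *m y'^T = U *m (Sel'^T *m w^T).
  by rewrite -trmx_mul -hy hw !trmx_mul trmxK mulmxA.
rewrite sqnorm_iso; last exact: (proj2 hU).
rewrite !trmx_mul trmxK -!mulmxA (mulmxA U^T U) (proj2 hU) mul1mx.
rewrite [X in _ <= X]sqnorm_iso; last exact: (proj2 hV).
apply: ST_lower => i pi; rewrite !mxE big1 // => j _; rewrite !mxE.
case: (eqVneq (j : nat) i) => [e|e]; last by rewrite mul0r.
by exfalso; move: pi; rewrite -e ltnNge -ltnS ltn_ord.
Qed.

End SVD.


Section NumH.
Variable R : rcfType.

Lemma small_mul (a T e : R) : 0 <= a -> a < T -> 0 <= e -> e <= T^-1 -> a * e < 1.
Proof.
move=> a0 aT e0 eT; have T0 : 0 < T by apply: le_lt_trans aT.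
apply: (@le_lt_trans _ _ (a * T^-1)); first exact: ler_wpM2l.
by rewrite ltr_pdivrMr // mul1r.
Qed.

Lemma small_mul_le (a T e : R) : 0 <= a -> a < T -> 0 <= e -> e <= T^-1 -> a * e <= 1.
Proof. move=> a0 aT e0 eT; apply: ltW; exact: (small_mul a0 aT e0 eT). Qed.

Lemma half_trick (u a k b : R) : 0 <= u -> b *+ 2 <= 1 -> u <= a * k + b * u -> u <= (a * k) *+ 2.
Proof.
move=> u0 b2 h.
have h1 : u *+ 2 <= (a * k) *+ 2 + (b * u) *+ 2 by rewrite -mulrnDl; exact: ler_wMn2r.
have h2 : (b * u) *+ 2 <= u by rewrite -mulrnAl; rewrite -{2}[u]mul1r; exact: ler_wpM2r.
have h3 : u + u <= (a * k) *+ 2 + u by rewrite -mulr2n; apply: le_trans h1 _; rewrite lerD2l.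
by rewrite lerD2r in h3.
Qed.

Lemma lt4 (a b c : R) : 0 <= a -> 0 <= b -> 0 <= c ->
  [/\ 1 <= 1 + a + b + c, a < 1 + a + b + c, b < 1 + a + b + c & c < 1 + a + b + c].
Proof.
move=> a0 b0 c0.
have h1 : forall x y : R, 0 <= y -> x < x + (1 + y).
  move=> x y y0; rewrite ltrDl; apply: (lt_le_trans ltr01); by rewrite lerDl.
split.
- by rewrite -!addrA lerDl !addr_ge0.
- by rewrite [1 + a]addrC -!addrA h1 // addr_ge0.
- by rewrite (addrAC 1 a b) [1 + b]addrC -!addrA h1 // addr_ge0.
- by rewrite addrC -addrA h1 // addr_ge0.
Qed.

Lemma reassoc (a q e c u : R) : a * (q * e * (c * u)) = a * q * c * e * u.
Proof. by rewrite !mulrA (mulrAC (a * q) e c). Qed.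

End NumH.

Theorem mainTheorem3 (R : rcfType) (M n p : nat)
  (hn : (0 < n)%N) (hp : (0 < p)%N) (hM : (0 < M)%N) (hnpM : (n + p < M)%N)
  (A : 'M[R]_(n, n + p)) (G : 'M[R]_(M - n, n + p)) (D : 'M[R]_(M - n, M - n - p))
  (hK0 : invertible (block_mx A (0 : 'M[R]_(n, M - n - p)) G D)) :
  exists eps0 : R, 0 < eps0 /\
    forall B : 'M[R]_(n, M - n - p), spec_norm_le B eps0 ->
      invertible (block_mx A B G D) /\
      forall Kinv : 'M[R]_(n + p + (M - n - p), n + (M - n)),
        is_inverse (block_mx A B G D) Kinv ->
        let E := ulsubmx Kinv in
        let C := ursubmx Kinv in
        let H := dlsubmx Kinv in
        let F := drsubmx Kinv in
        forall L : 'M[R]_(n + p, M - n), trunc_svd p C L ->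
          invertible (block_mx E L H F) /\
          exists (At : 'M[R]_(n, n + p)) (Gt : 'M[R]_(M - n, n + p))
                 (Dt : 'M[R]_(M - n, M - n - p)),
            is_inverse (block_mx E L H F)
                       (block_mx At (0 : 'M[R]_(n, M - n - p)) Gt Dt) /\
            B = A *m (L - C) *m Dt /\
            A - At = A *m (L - C) *m Gt.
Proof.
case: hK0 => Y0 [hKY hYK].
have hpm : (p < M - n)%N by rewrite ltn_subRL.
set K0 := block_mx A 0 G D in hKY hYK.
set E0 := ulsubmx Y0.
have AE0 : A *m E0 = 1%:M.
  move: hKY; rewrite -[Y0]submxK mulmx_block [1%:M]scalar_mx_block.
  by case/eq_block_mx => h _ _ _; rewrite -h mul0mx addr0.
set cY := frob Y0.
set cK0 := frob K0.
set cG := frob G.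
set cE := frob E0^T.
set cKi := cY *+ 2 *+ 2.
set kap := (M - n)%:R * cKi * (M - n - p)%:R * cE.
have cY0 : 0 <= cY by exact: frob_ge0.
have cK00 : 0 <= cK0 by exact: frob_ge0.
have cG0 : 0 <= cG by exact: frob_ge0.
have cE0 : 0 <= cE by exact: frob_ge0.
have cKi0 : 0 <= cKi by rewrite /cKi !mulrn_wge0.
have kap0 : 0 <= kap by rewrite /kap !mulr_ge0 // ler0n.
set T := 1 + cKi + kap * cG + (cK0 + 1) *+ 2 * kap.
have a10 : 0 <= kap * cG by exact: mulr_ge0.
have a20 : 0 <= (cK0 + 1) *+ 2 * kap by rewrite mulr_ge0 // mulrn_wge0 // addr_ge0.
have [hT1 cKiT a1T a2T] := lt4 cKi0 a10 a20.
have T0 : 0 < T by apply: lt_le_trans hT1.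
exists T^-1; split; first by rewrite invr_gt0.
move=> B [_ hB].
set e2 := T^-1 ^+ 2.
have eps0 : 0 <= T^-1 by rewrite invr_ge0 ltW.
have eps1 : T^-1 <= 1 by rewrite invr_le1 // unitfE gt_eqF.
have e20 : 0 <= e2 by exact: sqr_ge0.
have e2T : e2 <= T^-1 by rewrite /e2 expr2 -{3}[T^-1]mulr1; apply: ler_wpM2l.
have e21 : e2 <= 1 by apply: le_trans e2T eps1.
have hB' : bnd B e2 by exact: hB.
set NB := block_mx (0 : 'M[R]_(n, n + p)) B (0 : 'M[R]_(M - n, n + p)) (0 : 'M[R]_(M - n, M - n - p)).
have KE : block_mx A B G D = K0 + NB by rewrite /K0 /NB add_block_mx !addr0 add0r.
have bNB : bnd NB e2 by apply: bnd_block0.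
have Kb : forall x, sqnorm x <= cKi * sqnorm (block_mx A B G D *m x).
  move=> x.
  have ex : x = Y0 *m (block_mx A B G D *m x - NB *m x).
    by rewrite -mulmxBl KE addrK mulmxA hYK mul1mx.
  have h : sqnorm x <= cY * ((sqnorm (block_mx A B G D *m x) + e2 * sqnorm x) *+ 2).
    rewrite {1}ex; apply: le_trans (frob_bound _ _) _.
    apply: ler_wpM2l => //; apply: le_trans (sqnormD _ _) _.
    by apply: ler_wMn2r; rewrite lerD2l sqnormN.
  rewrite /cKi mulrnAl; apply: (half_trick (b := cY *+ 2 * e2)) (sqnorm_ge0 _) _ _.
    by rewrite -mulrnAl; exact: (small_mul_le cKi0 cKiT e20 e2T).
  apply: le_trans h _; rewrite mulrnAr mulrDr mulrnDl !mulrnAl mulrA.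
  done.
have Kinj : forall x : 'cV[R]_(n + p + (M - n - p)), block_mx A B G D *m x = 0 -> x = 0.
  move=> x hx; apply: sqnorm_eq0; apply/eqP; rewrite eq_le sqnorm_ge0 andbT.
  by have := Kb x; rewrite hx sqnorm0 mulr0.
split; first exact: (inj_invertible (conj hKY hYK) Kinj).
move=> Kinv hKinv E C H F L hL.
have KinvE : Kinv = block_mx E C H F by rewrite /E /C /H /F submxK.
case: (hKinv) => hK1 hK2.
have ACBF : A *m C + B *m F = 0.
  move: hK1; rewrite KinvE mulmx_block [1%:M]scalar_mx_block.
  by case/eq_block_mx.
have EACG : E *m A + C *m G = 1%:M.
  move: hK2; rewrite KinvE mulmx_block [1%:M]scalar_mx_block.
  by case/eq_block_mx.
have bKinv : bnd Kinv cKi.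
  move=> w; apply: le_trans (Kb _) _; by rewrite mulmxA hK1 mul1mx.
have bF : bnd F cKi by exact: bnd_drsub.
have bFt := bnd_tr bF.
have bBt := bnd_tr hB'.
have bEt := frob_bound E0^T.
case: hL => U [V [S [hU [hV [hS [hC hLd]]]]]].
set sg := sgm hn hpm S.
have sgk : sg ^+ 2 <= kap * e2.
  have [y [y0 hy]] := sigma_bound hn hpm hS hU hV AE0.
  rewrite -hC in hy.
  have ACe : A *m C = - (B *m F) by apply/eqP; rewrite -addr_eq0 ACBF.
  have CtAt : C^T *m (A^T *m y) = - (F^T *m (B^T *m y)).
    by rewrite mulmxA -trmx_mul ACe linearN /= trmx_mul mulNmx mulmxA.
  have yE : y = E0^T *m (A^T *m y) by rewrite mulmxA -trmx_mul AE0 trmx1 mul1mx.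
  set u := sqnorm (A^T *m y).
  have u0 : 0 < u.
    rewrite lt_def sqnorm_ge0 andbT; apply/eqP => /sqnorm_eq0 h0.
    by move: y0; rewrite yE h0 mulmx0 eqxx.
  have : sg ^+ 2 * u <= (kap * e2) * u.
    apply: le_trans hy _; rewrite CtAt sqnormN.
    apply: le_trans (bFt _) _.
    have c1 : 0 <= (M - n)%:R * cKi by rewrite mulr_ge0 ?ler0n.
    have c2 : 0 <= (M - n - p)%:R * e2 by rewrite mulr_ge0 ?ler0n.
    apply: le_trans (ler_wpM2l c1 (bBt _)) _.
    rewrite {1}yE; apply: le_trans (ler_wpM2l c1 (ler_wpM2l c2 (bEt _))) _.
    by rewrite reassoc.
  by rewrite ler_pM2r.
have sg0 : 0 <= sg ^+ 2 by exact: sqr_ge0.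
have bCL : bnd (C - L) (sg ^+ 2) by rewrite hC hLd; exact: bnd_CL.
have bLC : bnd (L - C) (sg ^+ 2) by rewrite -opprB; exact: bnd_opp.
set Z := Zm U.
have ZZ : Z^T *m Z = 1%:M := Zm_ortho hU.
have ZL : Z^T *m L = 0 by rewrite hLd; exact: Zm_trunc.
have bZt : bnd Z^T 1 := bnd_Zt hU.
have bZ : bnd Z 1 := bnd_iso ZZ.
set X1 := Z^T *m (C - L) *m G *m Z.
have bX1 : bnd X1 (1 * sg ^+ 2 * cG * 1).
  apply: bnd_mul; first by rewrite mul1r mulr_ge0.
    apply: bnd_mul; first by rewrite mul1r.
      by apply: bnd_mul => //; exact: ler01.
    exact: frob_bound.
  exact: bZ.
have X1small : 1 * sg ^+ 2 * cG * 1 < 1.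
  rewrite mulr1 mul1r; apply: le_lt_trans (_ : kap * cG * e2 < 1).
    by rewrite [kap * _ * _]mulrAC; apply: ler_wpM2r.
  exact: (small_mul a10 a1T e20 e2T).
set W1 := 1%:M - X1.
have W1u : W1 \in unitmx.
  apply: inj_unit => x hx; apply: sq_small X1small _.
  have ex : x = X1 *m x by apply/eqP; rewrite -subr_eq0 -{1}[x]mul1mx -mulmxBl hx.
  rewrite {1}ex; exact: bX1.
have ZEAZ : Z^T *m E *m (A *m Z) = W1.
  rewrite mulmxA -(mulmxA _ E) -[E *m A](addrK (C *m G)) EACG.
  rewrite /W1 /X1 mulmxBr mulmxBl mulmx1 ZZ; congr (_ - _).
  by rewrite mulmxBr ZL subr0 !mulmxA.
have ZEu : Z^T *m E \in unitmx.
  have h1 : (Z^T *m E) *m (A *m Z *m invmx W1) = 1%:M by rewrite mulmxA ZEAZ mulmxV.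
  by case: (mulmx1_unit h1).
set P := invmx (Z^T *m E) *m Z^T.
have PE : P *m E = 1%:M by rewrite -mulmxA mulVmx.
have PL : P *m L = 0 by rewrite -mulmxA ZL mulmx0.
set N := block_mx (0 : 'M[R]_(n + p, n)) (L - C) (0 : 'M[R]_(M - n - p, n)) (0 : 'M[R]_(M - n - p, M - n)).
have JE : block_mx E L H F = Kinv + N.
  by rewrite KinvE /N add_block_mx !addr0 [C + _]addrC subrK.
have bN : bnd N (sg ^+ 2) by apply: bnd_block0.
have bK : bnd (block_mx A B G D) ((cK0 + e2) *+ 2) by rewrite KE; apply: bnd_add => //; exact: frob_bound.
have Jinj : forall x : 'cV[R]_(n + (M - n)), block_mx E L H F *m x = 0 -> x = 0.
  move=> x hx.
  have ex : x = - (block_mx A B G D *m (N *m x)).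
    apply/eqP; rewrite -addr_eq0 -{1}[x]mul1mx -hK1 -mulmxA -mulmxDr -mulmxDl -JE hx mulmx0 //.
  apply: (@sq_small _ _ _ ((cK0 + e2) *+ 2 * sg ^+ 2)).
    apply: le_lt_trans (_ : (cK0 + 1) *+ 2 * kap * e2 < 1); last exact: (small_mul a20 a2T e20 e2T).
    rewrite -mulrA; apply: ler_pM => //; first by rewrite mulrn_wge0 // addr_ge0.
    by apply: ler_wMn2r; rewrite lerD2l.
  rewrite {1}ex sqnormN -mulrA; apply: le_trans (bK _) _.
  apply: ler_wpM2l; first by rewrite mulrn_wge0 // addr_ge0.
  exact: bN.
have Jinv : invertible (block_mx E L H F) := inj_invertible (conj hK2 hK1) Jinj.
split; first exact: Jinv.
case: Jinv => Xj [hJX hXJ].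
set R0 := row_mx P (0 : 'M[R]_(n, M - n - p)).
have R0J : R0 *m block_mx E L H F = row_mx 1%:M 0.
  by rewrite /R0 mul_row_block PE PL !mul0mx !addr0.
have R0X : R0 = usubmx Xj.
  rewrite -[R0]mulmx1 -hJX mulmxA R0J.
  by rewrite -{1}[Xj]vsubmxK mul_row_col mul1mx mul0mx addr0.
have ur0 : ursubmx Xj = 0.
  by rewrite /ursubmx -R0X /R0 row_mxKr.
set At := ulsubmx Xj; set Gt := dlsubmx Xj; set Dt := drsubmx Xj.
have XjE : Xj = block_mx At 0 Gt Dt by rewrite -ur0 submxK.
exists At, Gt, Dt.
rewrite -XjE; split; first by split.
have key : Xj + block_mx A B G D *m (N *m Xj) = block_mx A B G D.
  have := congr1 (mulmx (block_mx A B G D)) hJX.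
  by rewrite mulmx1 JE mulmxDl mulmxDr (mulmxA _ Kinv) hK1 mul1mx.
move: key; rewrite {1 2}XjE /N !mulmx_block !mul0mx !add0r !mulmx0 !addr0 add_block_mx.
case/eq_block_mx => ul ur _ _.
split; first by rewrite -ur add0r mulmxA.
by apply/eqP; rewrite subr_eq addrC -mulmxA ul.
Qed.
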